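(* Let $n=2$ and let $M$ be a Griffiths positive $2\times 2$ matrix of constant coefficient $(1,1)$-forms on $\mathbb{C}^2$. Then $\Omega=\det(M)$ is a Lefschetz form for the bidegree $(0,0)$, i.e. $c\mapsto c\,\Omega$ is an isomorphism $\mathbb{C}=V^{0,0}\to V^{2,2}$ (equivalently $\Omega\neq 0$).
   Context: $V^{p,q}$ is the space of constant coefficient $(p,q)$-forms on $\mathbb{C}^n$. A $(1,1)$-form is Kähler if it equals $\sum_l\frac{\sqrt{-1}}{2}dw_l\wedge d\overline{w_l}$ in some complex linear coordinates. A matrix $M=(\alpha_{i,j})$ of $(1,1)$-forms with $\alpha_{i,j}=\overline{\alpha_{j,i}}$ is Griffiths positive if $\sum_{i,j}\theta_i\alpha_{i,j}\overline{\theta_j}$ is Kähler for all nonzero $\theta$. $\det(M)=\alpha_{1,1}\wedge\alpha_{2,2}-\alpha_{1,2}\wedge\alpha_{2,1}$. *)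

(* Defs.v *)
(* Complex numbers are modelled as R[i] = complex R for an
   arbitrary real closed field R (R = the reals is the case of the paper). *)
From HB Require Import structures.
From mathcomp Require Import all_boot all_order all_algebra.
From mathcomp Require Import complex.
Set Implicit Arguments. Unset Strict Implicit. Unset Printing Implicit Defensive.
Import Order.TTheory GRing.Theory Num.Theory.
Local Open Scope ring_scope.

(* A constant coefficient (1,1)-form on C^2,
     alpha = sum_{k,l} a k l * (sqrt(-1)/2) dz_k /\ dz_l-bar,
   is represented by its coefficient matrix a : 'M[C]_2. *)
Definition form11 (C : Type) := 'M[C]_2.

(* Complex conjugate of a (1,1)-form:
   conj(a_kl (i/2) dz_k /\ dzbar_l) = conj(a_kl) (i/2) dz_l /\ dzbar_k. *)
Definition form_conj (C : numClosedFieldType) (a : form11 C) : form11 C :=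
  \matrix_(k < 2, l < 2) (a l k)^*.

(* The (1,1)-form sum_l (i/2) dw_l /\ dwbar_l, where w = P z
   (w_l = sum_k P l k z_k) are new complex linear coordinates:
   its coefficient in front of (i/2) dz_k /\ dzbar_m is sum_l P l k * conj (P l m). *)
Definition std_kahler_in (C : numClosedFieldType) (P : 'M[C]_2) : form11 C :=
  \matrix_(k < 2, m < 2) \sum_(l < 2) P l k * (P l m)^*.

Definition kahler (C : numClosedFieldType) (a : form11 C) : Prop :=
  exists P : 'M[C]_2, P \in unitmx /\ a = std_kahler_in P.

(* V^{2,2} on C^2 is one-dimensional; an element is represented by its
   coefficient with respect to ((i/2) dz_1/\dzbar_1) /\ ((i/2) dz_2/\dzbar_2).
   Wedge product V^{1,1} x V^{1,1} -> V^{2,2}, computed from the exterior algebra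
   (the terms dz_1 dzbar_2 dz_2 dzbar_1 and dz_2 dzbar_1 dz_1 dzbar_2 carry sign -1). *)
Definition wedge11 (C : numClosedFieldType) (a b : form11 C) : C :=
  a 0 0 * b 1 1 + a 1 1 * b 0 0 - a 0 1 * b 1 0 - a 1 0 * b 0 1.

Definition formmx (C : Type) := 'I_2 -> 'I_2 -> form11 C.

Definition hermitian_formmx (C : numClosedFieldType) (M : formmx C) : Prop :=
  forall i j, M i j = form_conj (M j i).

Definition formmx_eval (C : numClosedFieldType) (M : formmx C) (theta : 'I_2 -> C)
  : form11 C := \sum_(i < 2) \sum_(j < 2) (theta i * (theta j)^*) *: M i j.

Definition griffiths_positive (C : numClosedFieldType) (M : formmx C) : Prop :=
  hermitian_formmx M /\
  forall theta : 'I_2 -> C, (exists i, theta i != 0) -> kahler (formmx_eval M theta).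

Definition det_formmx (C : numClosedFieldType) (M : formmx C) : C :=
  wedge11 (M 0 0) (M 1 1) - wedge11 (M 0 1) (M 1 0).

Definition lefschetz00 (C : numClosedFieldType) (Omega : C) : Prop :=
  bijective (fun c : C => c * Omega).

(* Main.v *)
Require Import Defs.
From mathcomp Require Import all_boot all_order all_algebra.
From mathcomp Require Import complex.
From mathcomp Require Import ring.
Import Order.TTheory GRing.Theory Num.Theory.
Local Open Scope ring_scope.

Section S.
Variable C : numClosedFieldType.
Implicit Types a b U P : 'M[C]_2.

Lemma big_ord2 (V : nmodType) (F : 'I_2 -> V) : \sum_(i < 2) F i = F 0 + F 1.
Proof.
rewrite big_ord_recl big_ord_recl big_ord0 addr0.
by congr (_ + F _); apply/val_inj.
Qed.

Lemma det2 a : \det a = a 0 0 * a 1 1 - a 0 1 * a 1 0.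
Proof.
rewrite (expand_det_row _ 0) !big_ord2 /cofactor !det_mx11 !mxE /=.
rewrite !expr0 !expr1 /=. 
have -> : lift 0 (0 : 'I_1) = 1 :> 'I_2 by apply/val_inj.
have -> : lift 1 (0 : 'I_1) = 0 :> 'I_2 by apply/val_inj.
ring.
Qed.

Definition cj a := map_mx (@Num.conj C) a.
Definition T U a := U^T *m a *m cj U.

Lemma std_kahlerE P : std_kahler_in P = P^T *m cj P.
Proof. by apply/matrixP => k m; rewrite !mxE; apply: eq_bigr => l _; rewrite !mxE. Qed.

Lemma T_std U P : T U (std_kahler_in P) = std_kahler_in (P *m U).
Proof. by rewrite /T !std_kahlerE trmx_mul /cj map_mxM !mulmxA. Qed.

Lemma kahler_T U a : U \in unitmx -> kahler a -> kahler (T U a).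
Proof.
move=> HU [P [HP ->]]; exists (P *m U); split; last exact: T_std.
by rewrite unitmx_mul HP HU.
Qed.

Lemma TD U a b : T U (a + b) = T U a + T U b.
Proof. by rewrite /T mulmxDr mulmxDl. Qed.

Lemma TZ U s a : T U (s *: a) = s *: T U a.
Proof. by rewrite /T scalemxAl scalemxAr. Qed.

Lemma wedge_det a b : wedge11 a b = \det (a + b) - \det a - \det b.
Proof. rewrite !det2 /wedge11 !mxE; ring. Qed.

Lemma detT U a : \det (T U a) = \det U * (\det U)^* * \det a.
Proof.
rewrite /T !det_mulmx det_tr /cj det_map_mx; ring.
Qed.

Lemma wedge_T U a b : wedge11 (T U a) (T U b) = \det U * (\det U)^* * wedge11 a b.
Proof. rewrite !wedge_det -TD !detT; ring. Qed.

Lemma cjK a : cj (cj a) = a.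
Proof. by apply/matrixP => i j; rewrite !mxE conjCK. Qed.

Lemma form_conjE a : form_conj a = (cj a)^T.
Proof. by apply/matrixP => i j; rewrite !mxE. Qed.

Lemma form_conj_T U a : form_conj (T U a) = T U (form_conj a).
Proof.
rewrite !form_conjE /T /cj !map_mxM map_trmx -/(cj U) -/(cj (cj U)) cjK.
rewrite !trmx_mul !map_trmx trmxK mulmxA; done.
Qed.

Lemma eval_T U (M : formmx C) th :
  formmx_eval (fun i j => T U (M i j)) th = T U (formmx_eval M th).
Proof. by rewrite /formmx_eval !big_ord2 !TD !TZ. Qed.

Lemma ord2 (k : 'I_2) : k = 0 \/ k = 1.
Proof. case: k => [[|[|//]] Hk]; [left|right]; exact: val_inj. Qed.

Lemma kahler_diag a k : kahler a -> 0 < a k k.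
Proof.
move=> [P [HP ->]]; rewrite !mxE big_ord2.
have hd : \det P != 0 by rewrite -unitfE -unitmxE.
have [h0|h0] := eqVneq (P 0 k) 0.
  have [h1|h1] := eqVneq (P 1 k) 0.
    case: (ord2 k) => Ek; rewrite Ek in h0 h1;
    by move: hd; rewrite det2 h0 h1 ?mul0r ?mulr0 subrr eqxx.
  by rewrite h0 mul0r add0r mul_conjC_gt0.
by apply: ltr_wpDr; [exact: mul_conjC_ge0 | rewrite mul_conjC_gt0].
Qed.
End S.

Lemma key (C : numClosedFieldType) (M : formmx C) :
  M 0 0 = 1%:M -> M 1 0 = form_conj (M 0 1) ->
  (forall th : 'I_2 -> C, (exists i, th i != 0) -> kahler (formmx_eval M th)) ->
  det_formmx M != 0.
Proof.
move=> H00 H10 Hg.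
set B := M 1 1; set X := M 0 1.
have hB : forall k, 0 < B k k.
  move=> k; apply: kahler_diag; have := Hg (fun i => if i == 0 then 0 else 1).
  rewrite /formmx_eval !big_ord2 /= conjC0 conjC1 !mul0r !mulr0 !scale0r mul1r scale1r !add0r.
  move=> h; apply: h; exists 1; by rewrite /= oner_neq0.
have hX : forall k, X k k * (X k k)^* < B k k.
  move=> k; set x := X k k; set b := B k k.
  have bpos := hB k.
  have bn0 : b != 0 by rewrite gt_eqF.
  pose t := - x / b.
  have := Hg (fun i => if i == 0 then 1 else t).
  have -> : formmx_eval M (fun i => if i == 0 then 1 else t) =
     1%:M + t^* *: X + t *: M 1 0 + (t * t^*) *: B.
    by rewrite /formmx_eval !big_ord2 /= conjC1 !mul1r !mulr1 H00 scale1r addrA.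
  move/(_ (ex_intro _ 0 (oner_neq0 _)))/(@kahler_diag _ _ k).
  rewrite !mxE H10 !mxE eqxx /= -/x -/b.
  have bc : b^* = b by rewrite geC0_conj // ltW.
  have tc : t^* = - x^* / b.
    rewrite /t rmorphM rmorphN fmorphV; change (- x^* / b^* = - x^* / b).
    by rewrite bc.
  rewrite tc /t.
  have -> : 1 + - x^* / b * x + - x / b * x^* + - x / b * (- x^* / b) * b
            = (b - x * x^*) / b by field.
  move=> h; rewrite -subr_gt0.
  have -> : b - x * x^* = (b - x * x^*) / b * b by rewrite divfK.
  exact: mulr_gt0.
rewrite /det_formmx H00 H10 /wedge11 !mxE /= -/X -/B.
set x0 := X 0 0; set x1 := X 1 1; set y := X 0 1; set z := X 1 0.
have -> : 1 * B 1 1 + 1 * B 0 0 - 0 * B 1 0 - 0 * B 0 1 -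
  (x0 * x1^* + x1 * x0^* - y * y^* - z * z^*) =
  (B 0 0 - x0 * x0^*) + (B 1 1 - x1 * x1^*) +
  ((x0 - x1) * (x0 - x1)^* + y * y^* + z * z^*).
  rewrite rmorphB; ring.
rewrite gt_eqF // ltr_wpDr //.
  by rewrite !addr_ge0 // mul_conjC_ge0.
by rewrite addr_gt0 // subr_gt0 hX.
Qed.

Theorem mainTheorem5 (R : rcfType) (M : formmx R[i]) :
  griffiths_positive M -> lefschetz00 (det_formmx M).
Proof.
move=> [Hh Hg].
have [P [PU EP]] : kahler (M 0 0).
  have := Hg (fun i => if i == 0 then 1 else 0).
  rewrite /formmx_eval !big_ord2 /= conjC0 conjC1 !mul0r !mulr0 !scale0r mul1r scale1r !addr0.
  move=> h; apply: h; exists 0; by rewrite /= oner_neq0.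
set U := invmx P.
have HU : U \in unitmx by rewrite unitmx_inv.
pose M' := fun i j => @T _ U (M i j).
have H00 : M' 0 0 = 1%:M.
  rewrite /M' EP T_std mulmxV // std_kahlerE trmx1 /cj map_mx1 mulmx1 //.
have H10 : M' 1 0 = form_conj (M' 0 1) by rewrite /M' form_conj_T -Hh.
have Hg' : forall th : 'I_2 -> R[i], (exists i, th i != 0) -> kahler (formmx_eval M' th).
  by move=> th hth; rewrite eval_T; apply: kahler_T => //; apply: Hg.
have K := @key _ M' H00 H10 Hg'.
have E : det_formmx M' = \det U * (\det U)^* * det_formmx M.
  by rewrite /det_formmx /M' !wedge_T; ring.
have Hn : det_formmx M != 0.
  by apply/eqP => h; move: K; rewrite E h mulr0 eqxx.
exists (fun c => c / det_formmx M) => c /=; [exact: mulfK | exact: divfK].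
Qed.
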